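(* Let $f=\sum_{j=0}^7f_je_j$ be a paravector-valued function on $\mathbb R^8$ whose coordinate functions have partial derivatives, identified with the octonion-valued function with the same coordinates. Then: (a) $f$ is left regular if and only if $[\partial_xfI]_0=0$ and $[\partial_xfI]_1=0$; (b) $f$ is B-regular (both left and right regular) if and only if $[\partial_xfI]_0=0$, $[\partial_xfI]_1=0$, and $[\partial_xfW]_1=0$.
   Context: $\mathrm{Cl}_{0,7}$ is the real associative Clifford algebra generated by $e_1,\dots,e_7$ with $e_ie_j+e_je_i=-2\delta_{ij}$ and $e_0=1$; $e_{i_1\cdots i_k}=e_{i_1}\cdots e_{i_k}$; $[c]_k$ is the grade-$k$ part of $c$. $\partial_xf=\sum_{i,j=0}^7e_ie_j\,\partial_{x_i}f_j$ (Clifford product), and $\partial_xfI$, $\partial_xfW$ denote Clifford products of $\partial_xf$ with $I$, $W$. $W=e_{123}+e_{145}+e_{176}+e_{246}+e_{257}+e_{347}+e_{365}$ and $I=\frac1{16}(1+We_{1234567})(1-e_{1234567})$. $\mathbb O$ is the octonion algebra with basis $1,e_1,\dots,e_7$ and product $\circ$ determined by: $e_i\circ e_i=-1$, $e_i\circ e_j=-e_j\circ e_i$ ($i\ne j$), and $e_i\circ e_j=e_k$, $e_j\circ e_k=e_i$, $e_k\circ e_i=e_j$ for each ordered triple $(i,j,k)\in\{(1,2,3),(1,4,5),(1,7,6),(2,4,6),(2,5,7),(3,4,7),(3,6,5)\}$. For octonion-valued $f$: $D_xf=\sum_{i,j=0}^7e_i\circ e_j\,\partial_{x_i}f_j$,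 $fD_x=\sum_{i,j=0}^7e_j\circ e_i\,\partial_{x_i}f_j$; left regular means $D_xf=0$, right regular means $fD_x=0$. *)

(* Defs.v *)
From Stdlib Require Import Reals Arith List Bool.
Open Scope R_scope.

Fixpoint sumR (n : nat) (g : nat -> R) : R :=
  match n with O => 0 | S m => sumR m g + g m end.

Fixpoint cnt (n : nat) (p : nat -> bool) : nat :=
  match n with O => O | S m => (cnt m p + (if p m then 1 else 0))%nat end.

Fixpoint sumN (n : nat) (g : nat -> nat) : nat :=
  match n with O => O | S m => (sumN m g + g m)%nat end.

(* ======================================================================
   The real Clifford algebra Cl_{0,7}, e_i e_j + e_j e_i = -2 delta_ij.
   An element is a function from blade masks A (0 <= A < 128) to R:
   bit (i-1) of A is set iff e_i occurs in the basis blade e_A, whose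
   factors are written in increasing order.  Mask 0 is e_0 = 1.
   ====================================================================== *)
Definition Cl := nat -> R.

(* number of pairs (a in A, b in B) with a > b *)
Definition inv_count (A B : nat) : nat :=
  sumN 7 (fun k => if Nat.testbit A k
                   then cnt k (fun l => Nat.testbit B l) else O).

Definition meet_count (A B : nat) : nat :=
  cnt 7 (fun k => Nat.testbit A k && Nat.testbit B k).

(* e_A e_B = blade_sign A B * e_(A xor B)  (since e_i^2 = -1) *)
Definition blade_sign (A B : nat) : R :=
  if Nat.even (inv_count A B + meet_count A B) then 1 else -1.

Definition cl_mul (x y : Cl) : Cl :=
  fun C => sumR 128 (fun A => blade_sign A (Nat.lxor A C) * x A * y (Nat.lxor A C)).

Definition cl_add (x y : Cl) : Cl := fun A => x A + y A.
Definition cl_scal (r : R) (x : Cl) : Cl := fun A => r * x A.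
Definition cl_sum (n : nat) (g : nat -> Cl) : Cl := fun A => sumR n (fun k => g k A).
Definition cl_one : Cl := fun A => if Nat.eqb A 0 then 1 else 0.

Definition cl_e (i : nat) : Cl :=
  match i with
  | O => cl_one
  | S k => fun A => if Nat.eqb A (2 ^ k)%nat then 1 else 0
  end.

Definition cl_e3 (i j k : nat) : Cl := cl_mul (cl_mul (cl_e i) (cl_e j)) (cl_e k).

Definition cl_e1234567 : Cl :=
  cl_mul (cl_mul (cl_mul (cl_mul (cl_mul (cl_mul (cl_e 1) (cl_e 2)) (cl_e 3))
    (cl_e 4)) (cl_e 5)) (cl_e 6)) (cl_e 7).

Definition cl_W : Cl :=
  cl_add (cl_e3 1 2 3) (cl_add (cl_e3 1 4 5) (cl_add (cl_e3 1 7 6)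
  (cl_add (cl_e3 2 4 6) (cl_add (cl_e3 2 5 7) (cl_add (cl_e3 3 4 7)
  (cl_e3 3 6 5)))))).

Definition cl_I : Cl :=
  cl_scal (1 / 16)
    (cl_mul (cl_add cl_one (cl_mul cl_W cl_e1234567))
            (cl_add cl_one (cl_scal (-1) cl_e1234567))).

Definition grade (k : nat) (c : Cl) : Cl :=
  fun A => if Nat.ltb A 128 && Nat.eqb (cnt 7 (Nat.testbit A)) k then c A else 0.

(* ======================================================================
   Octonions: element = coordinates (nat -> R) on the basis 1,e_1..e_7.
   ====================================================================== *)
Definition Oct := nat -> R.

Definition oct_triples : list (nat * nat * nat) :=
  ((1,2,3) :: (1,4,5) :: (1,7,6) :: (2,4,6) :: (2,5,7) :: (3,4,7) :: (3,6,5) :: nil)%nat.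

(* e_i o e_j = fst (otab i j) * e_(snd (otab i j)) *)
Fixpoint otab_aux (i j : nat) (l : list (nat * nat * nat)) : R * nat :=
  match l with
  | nil => (0%R, O)
  | (a, b, c) :: l' =>
      if Nat.eqb i a && Nat.eqb j b then (1, c)
      else if Nat.eqb i b && Nat.eqb j c then (1, a)
      else if Nat.eqb i c && Nat.eqb j a then (1, b)
      else if Nat.eqb i b && Nat.eqb j a then (-1, c)
      else if Nat.eqb i c && Nat.eqb j b then (-1, a)
      else if Nat.eqb i a && Nat.eqb j c then (-1, b)
      else otab_aux i j l'
  end.

Definition otab (i j : nat) : R * nat :=
  if Nat.eqb i 0 then (1, j)
  else if Nat.eqb j 0 then (1, i)
  else if Nat.eqb i j then (-1, O)
  else otab_aux i j oct_triples.

Definition oe (i : nat) : Oct := fun k => if Nat.eqb k i then 1 else 0.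

Definition omul (x y : Oct) : Oct :=
  fun k => sumR 8 (fun i => sumR 8 (fun j =>
    if Nat.eqb (snd (otab i j)) k then fst (otab i j) * x i * y j else 0)).

Definition oscal (r : R) (x : Oct) : Oct := fun k => r * x k.
Definition osum (n : nat) (g : nat -> Oct) : Oct := fun k => sumR n (fun m => g m k).

(* Points of R^8 are x : nat -> R, coordinates x 0 .. x 7.
   A paravector/octonion valued f has coordinate functions f x j, j = 0..7.
   ====================================================================== *)
Definition upd (x : nat -> R) (i : nat) (t : R) : nat -> R :=
  fun n => if Nat.eqb n i then t else x n.

(* f depends only on the coordinates x_0..x_7 (i.e. f is a function on R^8) *)
Definition on_R8 (f : (nat -> R) -> nat -> R) : Prop :=
  forall x y, (forall n, (n < 8)%nat -> x n = y n) -> f x = f y.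

(* df i j x is the partial derivative d f_j / d x_i at x *)
Definition is_partials (f : (nat -> R) -> nat -> R)
  (df : nat -> nat -> (nat -> R) -> R) : Prop :=
  forall x i j, (i < 8)%nat -> (j < 8)%nat ->
    derivable_pt_lim (fun t => f (upd x i t) j) (x i) (df i j x).

Definition D_left (df : nat -> nat -> (nat -> R) -> R) (x : nat -> R) : Oct :=
  osum 8 (fun i => osum 8 (fun j => oscal (df i j x) (omul (oe i) (oe j)))).

Definition D_right (df : nat -> nat -> (nat -> R) -> R) (x : nat -> R) : Oct :=
  osum 8 (fun i => osum 8 (fun j => oscal (df i j x) (omul (oe j) (oe i)))).

Definition left_regular (df : nat -> nat -> (nat -> R) -> R) : Prop :=
  forall x k, (k < 8)%nat -> D_left df x k = 0.

Definition right_regular (df : nat -> nat -> (nat -> R) -> R) : Prop :=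
  forall x k, (k < 8)%nat -> D_right df x k = 0.

Definition B_regular df : Prop := left_regular df /\ right_regular df.

Definition cl_dirac (df : nat -> nat -> (nat -> R) -> R) (x : nat -> R) : Cl :=
  cl_sum 8 (fun i => cl_sum 8 (fun j => cl_scal (df i j x) (cl_mul (cl_e i) (cl_e j)))).

Definition grade_zero (k : nat) (c : Cl) : Prop := forall A, grade k c A = 0.

(* Main.v *)
Require Import Defs.
From Stdlib Require Import Reals Lra Lia ZArith Arith List Bool FunctionalExtensionality.
Open Scope R_scope.

Lemma sumR_ext_lt n f g : (forall k, (k < n)%nat -> f k = g k) -> sumR n f = sumR n g.
Proof. induction n; simpl; intros H; [reflexivity|]. rewrite IHn by (intros; apply H; lia). rewrite H by lia. reflexivity. Qed.

Lemma sumR_plus n f g : sumR n (fun k => f k + g k) = sumR n f + sumR n g.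
Proof. induction n; simpl; [ring|]. rewrite IHn. ring. Qed.

Lemma sumR_scal n c f : sumR n (fun k => c * f k) = c * sumR n f.
Proof. induction n; simpl; [ring|]. rewrite IHn. ring. Qed.

Lemma sumR_zero n f : (forall k, (k < n)%nat -> f k = 0) -> sumR n f = 0.
Proof. induction n; simpl; intros H; [reflexivity|]. rewrite IHn by (intros; apply H; lia). rewrite H by lia. ring. Qed.

Lemma sumR_swap n m g : sumR n (fun a => sumR m (fun b => g a b)) = sumR m (fun b => sumR n (fun a => g a b)).
Proof. induction n; simpl. - symmetry; apply sumR_zero; reflexivity.
 - rewrite IHn. rewrite <- sumR_plus. reflexivity. Qed.

Lemma sumR_single n a F : (a < n)%nat -> (forall A, (A < n)%nat -> A <> a -> F A = 0) -> sumR n F = F a.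
Proof. induction n; intros Ha H; [lia|]. simpl.
 destruct (Nat.eq_dec a n) as [->|Hne].
 - rewrite sumR_zero. ring. intros k Hk. apply H; lia.
 - rewrite IHn by (try lia; intros; apply H; lia). rewrite (H n) by lia. ring. Qed.

Definition zs (A B : nat) : Z := if Nat.even (inv_count A B + meet_count A B) then 1%Z else (-1)%Z.
Lemma blade_sign_z A B : blade_sign A B = IZR (zs A B).
Proof. unfold blade_sign, zs. destruct (Nat.even _); reflexivity. Qed.

Fixpoint den (l : list (nat * Z)) : Cl :=
  match l with nil => fun _ => 0
  | (b, z) :: l' => fun C => (if Nat.eqb b C then IZR z else 0) + den l' C end.
Fixpoint zden (l : list (nat * Z)) (C : nat) : Z :=
  match l with nil => 0%Z
  | (b, z) :: l' => ((if Nat.eqb b C then z else 0) + zden l' C)%Z end.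
Lemma den_z l C : den l C = IZR (zden l C).
Proof. induction l as [|[b z] l IH]; simpl; [reflexivity|]. rewrite plus_IZR, IH.
 destruct (b =? C)%nat; reflexivity. Qed.

Definition smul (l1 l2 : list (nat * Z)) : list (nat * Z) :=
  flat_map (fun p => map (fun q => (Nat.lxor (fst p) (fst q), (zs (fst p) (fst q) * snd p * snd q)%Z)) l2) l1.
Definition keyok (l : list (nat * Z)) : bool := forallb (fun p => Nat.ltb (fst p) 128) l.

Lemma den_app l1 l2 C : den (l1 ++ l2) C = den l1 C + den l2 C.
Proof. induction l1 as [|[b z] l IH]; simpl; [ring|]. rewrite IH. ring. Qed.

Lemma lxor_iff a b C : Nat.lxor a b = C <-> b = Nat.lxor a C.
Proof. split; intros; subst.
 - rewrite <- Nat.lxor_assoc, Nat.lxor_nilpotent, Nat.lxor_0_l. reflexivity.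
 - rewrite <- Nat.lxor_assoc, Nat.lxor_nilpotent, Nat.lxor_0_l. reflexivity. Qed.

Lemma den_map a z l2 C :
  IZR (zs a (Nat.lxor a C)) * IZR z * den l2 (Nat.lxor a C) =
  den (map (fun q => (Nat.lxor a (fst q), (zs a (fst q) * z * snd q)%Z)) l2) C.
Proof. induction l2 as [|[b w] l IH]; simpl; [ring|]. rewrite <- IH.
 destruct (b =? Nat.lxor a C)%nat eqn:E1.
 - apply Nat.eqb_eq in E1. assert (E2 : Nat.lxor a b = C) by (apply lxor_iff; auto).
   rewrite E2, Nat.eqb_refl. subst b. rewrite !mult_IZR. ring.
 - assert (E2 : (Nat.lxor a b =? C)%nat = false).
   { apply Nat.eqb_neq. intro H. apply lxor_iff in H. apply Nat.eqb_neq in E1. auto. }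
   rewrite E2. ring. Qed.

Lemma den_mul_pt l1 l2 C : keyok l1 = true -> cl_mul (den l1) (den l2) C = den (smul l1 l2) C.
Proof. unfold cl_mul. induction l1 as [|[a z] l IH]; intros Hk.
 - transitivity 0; [apply sumR_zero; intros; simpl; ring | reflexivity].
 - change (den (smul ((a,z)::l) l2) C) with (den (map (fun q => (Nat.lxor a (fst q), (zs a (fst q) * z * snd q)%Z)) l2 ++ smul l l2) C). simpl in Hk. apply andb_prop in Hk as [Ha Hk]. apply Nat.ltb_lt in Ha.
   rewrite den_app, <- IH by exact Hk.
   rewrite (sumR_ext_lt _ _ (fun A => blade_sign A (Nat.lxor A C) * (if (a =? A)%nat then IZR z else 0) * den l2 (Nat.lxor A C) + blade_sign A (Nat.lxor A C) * den l A * den l2 (Nat.lxor A C))) by (intros; simpl; ring).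
   rewrite sumR_plus. f_equal.
   rewrite (sumR_single _ a) by (try exact Ha; intros A _ HA; rewrite (proj2 (Nat.eqb_neq a A)) by auto; ring).
   rewrite Nat.eqb_refl, blade_sign_z. apply den_map. Qed.

Lemma den_mul l1 l2 : keyok l1 = true -> cl_mul (den l1) (den l2) = den (smul l1 l2).
Proof. intros; extensionality C; apply den_mul_pt; auto. Qed.

Definition mask (i : nat) : nat := match i with O => O | S k => (2 ^ k)%nat end.
Definition el (i : nat) : list (nat * Z) := (mask i, 1%Z) :: nil.
Lemma cl_e_den i : cl_e i = den (el i).
Proof. extensionality A. destruct i; cbn [cl_e den el mask]; unfold cl_one;
 [rewrite (Nat.eqb_sym 0 A) | rewrite (Nat.eqb_sym (2^i) A)]; destruct (_ =? _)%nat; ring. Qed.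
Lemma cl_one_den : cl_one = den ((0%nat, 1%Z) :: nil).
Proof. apply (cl_e_den 0). Qed.
Lemma cl_add_den a b : cl_add (den a) (den b) = den (a ++ b).
Proof. extensionality C. rewrite den_app. reflexivity. Qed.
Definition negp (p : nat * Z) : nat * Z := (fst p, (- snd p)%Z).
Lemma cl_scal_neg l : cl_scal (-1) (den l) = den (map negp l).
Proof. extensionality C. unfold cl_scal. induction l as [|[b z] l IH]; simpl; [ring|].
 rewrite <- IH. destruct (b =? C)%nat; rewrite ?opp_IZR; ring. Qed.

Definition e3l i j k := smul (smul (el i) (el j)) (el k).
Definition Wl := e3l 1 2 3 ++ (e3l 1 4 5 ++ (e3l 1 7 6 ++ (e3l 2 4 6 ++ (e3l 2 5 7 ++ (e3l 3 4 7 ++ e3l 3 6 5))))).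
Definition El := smul (smul (smul (smul (smul (smul (el 1) (el 2)) (el 3)) (el 4)) (el 5)) (el 6)) (el 7).
Definition Il := smul ((0%nat,1%Z) :: smul Wl El) ((0%nat,1%Z) :: map negp El).

Lemma W_den : cl_W = den Wl.
Proof. unfold cl_W, cl_e3. rewrite !cl_e_den.
 repeat rewrite den_mul by (vm_compute; reflexivity).
 rewrite !cl_add_den. reflexivity. Qed.

Lemma I_den : cl_I = cl_scal (1/16) (den Il).
Proof. unfold cl_I. rewrite W_den. unfold cl_e1234567. rewrite !cl_e_den.
 repeat rewrite den_mul by (vm_compute; reflexivity).
 rewrite cl_one_den, cl_scal_neg.
 rewrite !cl_add_den, den_mul by (vm_compute; reflexivity). reflexivity. Qed.

Lemma mul_sum_l n F Y C : cl_mul (cl_sum n F) Y C = sumR n (fun i => cl_mul (F i) Y C).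
Proof. unfold cl_mul, cl_sum.
 rewrite (sumR_ext_lt _ _ (fun A => sumR n (fun k => blade_sign A (Nat.lxor A C) * F k A * Y (Nat.lxor A C)))).
 - apply sumR_swap.
 - intros.
   transitivity (Y (Nat.lxor k C) * blade_sign k (Nat.lxor k C) * sumR n (fun k0 => F k0 k)); [ring|].
   rewrite <- sumR_scal. apply sumR_ext_lt. intros; ring. Qed.

Lemma mul_scal_l c X Y C : cl_mul (cl_scal c X) Y C = c * cl_mul X Y C.
Proof. unfold cl_mul, cl_scal. rewrite <- sumR_scal. apply sumR_ext_lt; intros; ring. Qed.
Lemma mul_scal_r c X Y C : cl_mul X (cl_scal c Y) C = c * cl_mul X Y C.
Proof. unfold cl_mul, cl_scal. rewrite <- sumR_scal. apply sumR_ext_lt; intros; ring. Qed.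

Lemma dirac_mul df x Y C : cl_mul (cl_dirac df x) Y C =
  sumR 8 (fun i => sumR 8 (fun j => df i j x * cl_mul (cl_mul (cl_e i) (cl_e j)) Y C)).
Proof. unfold cl_dirac. rewrite mul_sum_l. apply sumR_ext_lt; intros.
 rewrite mul_sum_l. apply sumR_ext_lt; intros. apply mul_scal_l. Qed.

Lemma lt8 i : (i < 8)%nat -> i = 0%nat \/ i = 1%nat \/ i = 2%nat \/ i = 3%nat \/ i = 4%nat \/ i = 5%nat \/ i = 6%nat \/ i = 7%nat.
Proof. lia. Qed.

Lemma keyok_el2 i j : (i < 8)%nat -> (j < 8)%nat -> keyok (el i) = true /\ keyok (smul (el i) (el j)) = true.
Proof. intros Hi Hj. destruct (lt8 i Hi) as [->|[->|[->|[->|[->|[->|[->| ->]]]]]]];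
 destruct (lt8 j Hj) as [->|[->|[->|[->|[->|[->|[->| ->]]]]]]]; split; vm_compute; reflexivity. Qed.

Lemma ee_den Y i j C : (i < 8)%nat -> (j < 8)%nat ->
  cl_mul (cl_mul (cl_e i) (cl_e j)) (den Y) C = IZR (zden (smul (smul (el i) (el j)) Y) C).
Proof. intros Hi Hj. destruct (keyok_el2 i j Hi Hj) as [H1 H2].
 rewrite !cl_e_den, den_mul by exact H1. rewrite den_mul_pt by exact H2. apply den_z. Qed.

Lemma DI_expand df x C : cl_mul (cl_dirac df x) cl_I C =
  sumR 8 (fun i => sumR 8 (fun j => df i j x * (1/16 * IZR (zden (smul (smul (el i) (el j)) Il) C)))).
Proof. rewrite dirac_mul. apply sumR_ext_lt; intros. apply sumR_ext_lt; intros.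
 rewrite I_den, mul_scal_r, ee_den by assumption. reflexivity. Qed.

Lemma DW_expand df x C : cl_mul (cl_dirac df x) cl_W C =
  sumR 8 (fun i => sumR 8 (fun j => df i j x * IZR (zden (smul (smul (el i) (el j)) Wl) C))).
Proof. rewrite dirac_mul. apply sumR_ext_lt; intros. apply sumR_ext_lt; intros.
 rewrite W_den, ee_den by assumption. reflexivity. Qed.

Fixpoint otabz_aux (i j : nat) (l : list (nat * nat * nat)) : Z * nat :=
  match l with
  | nil => (0%Z, O)
  | (a, b, c) :: l' =>
      if Nat.eqb i a && Nat.eqb j b then (1%Z, c)
      else if Nat.eqb i b && Nat.eqb j c then (1%Z, a)
      else if Nat.eqb i c && Nat.eqb j a then (1%Z, b)
      else if Nat.eqb i b && Nat.eqb j a then ((-1)%Z, c)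
      else if Nat.eqb i c && Nat.eqb j b then ((-1)%Z, a)
      else if Nat.eqb i a && Nat.eqb j c then ((-1)%Z, b)
      else otabz_aux i j l'
  end.
Definition otabz (i j : nat) : Z * nat :=
  if Nat.eqb i 0 then (1%Z, j)
  else if Nat.eqb j 0 then (1%Z, i)
  else if Nat.eqb i j then ((-1)%Z, O)
  else otabz_aux i j oct_triples.
Definition OFz i j k : Z := if Nat.eqb (snd (otabz i j)) k then fst (otabz i j) else 0%Z.

Lemma otab_z i j : (i < 8)%nat -> (j < 8)%nat -> otab i j = (IZR (fst (otabz i j)), snd (otabz i j)).
Proof. intros Hi Hj. destruct (lt8 i Hi) as [->|[->|[->|[->|[->|[->|[->| ->]]]]]]];
 destruct (lt8 j Hj) as [->|[->|[->|[->|[->|[->|[->| ->]]]]]]]; reflexivity. Qed.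

Lemma oe_neq i a : a <> i -> oe i a = 0.
Proof. intros H. unfold oe. rewrite (proj2 (Nat.eqb_neq a i) H). reflexivity. Qed.
Lemma oe_eq i : oe i i = 1.
Proof. unfold oe. rewrite Nat.eqb_refl. reflexivity. Qed.

Lemma omul_oe i j k : (i < 8)%nat -> (j < 8)%nat -> omul (oe i) (oe j) k = IZR (OFz i j k).
Proof. intros Hi Hj. unfold omul.
 rewrite (sumR_single _ i) by (try exact Hi; intros A _ HA; apply sumR_zero; intros;
   rewrite (oe_neq i A HA); destruct (_ =? _)%nat; ring).
 rewrite (sumR_single _ j) by (try exact Hj; intros A _ HA;
   rewrite (oe_neq j A HA); destruct (_ =? _)%nat; ring).
 rewrite !oe_eq, otab_z by assumption. unfold OFz. simpl. destruct (_ =? _)%nat; ring. Qed.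

Lemma DL_expand df x k : D_left df x k = sumR 8 (fun i => sumR 8 (fun j => df i j x * IZR (OFz i j k))).
Proof. unfold D_left, osum, oscal. apply sumR_ext_lt; intros. apply sumR_ext_lt; intros.
 rewrite omul_oe by assumption. reflexivity. Qed.
Lemma DR_expand df x k : D_right df x k = sumR 8 (fun i => sumR 8 (fun j => df i j x * IZR (OFz j i k))).
Proof. unfold D_right, osum, oscal. apply sumR_ext_lt; intros. apply sumR_ext_lt; intros.
 rewrite omul_oe by assumption. reflexivity. Qed.

Definition gcond k A := Nat.ltb A 128 && Nat.eqb (cnt 7 (Nat.testbit A)) k.
Lemma grade_true k c A : gcond k A = true -> grade k c A = c A.
Proof. unfold grade, gcond. intros ->. reflexivity. Qed.

Definition chk (k : nat) (L : list nat) A := negb (gcond k A) || existsb (Nat.eqb A) L.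
Lemma chk_all k L : forallb (chk k L) (seq 0 128) = true -> forall A, chk k L A = true.
Proof. intros H A. destruct (Nat.ltb A 128) eqn:E.
 - apply Nat.ltb_lt in E. rewrite forallb_forall in H. apply H. apply in_seq. lia.
 - unfold chk, gcond. rewrite E. reflexivity. Qed.
Lemma chk_in k L A : (forall A, chk k L A = true) -> gcond k A = true -> In A L.
Proof. intros H G. specialize (H A). unfold chk in H. rewrite G in H. simpl in H.
 apply existsb_exists in H as [y [Hy E]]. apply Nat.eqb_eq in E. subst; auto. Qed.

Lemma gz0 c : grade_zero 0 c <-> c 0%nat = 0.
Proof. split.
 - intros H. specialize (H 0%nat). rewrite grade_true in H by reflexivity. exact H.
 - intros H A. unfold grade. fold (gcond 0 A). destruct (gcond 0 A) eqn:E; [|reflexivity].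
   pose proof (chk_in 0 (0%nat :: nil) A (chk_all 0 (0%nat :: nil) ltac:(vm_compute; reflexivity)) E) as Hin.
   simpl in Hin. destruct Hin as [<-|[]]. exact H. Qed.

Lemma gz1 c : grade_zero 1 c <-> (c 1%nat = 0 /\ c 2%nat = 0 /\ c 4%nat = 0 /\ c 8%nat = 0 /\ c 16%nat = 0 /\ c 32%nat = 0 /\ c 64%nat = 0).
Proof. split.
 - intros H. pose proof (H 1%nat) as H1; pose proof (H 2%nat) as H2; pose proof (H 4%nat) as H4;
   pose proof (H 8%nat) as H8; pose proof (H 16%nat) as H16; pose proof (H 32%nat) as H32;
   pose proof (H 64%nat) as H64.
   rewrite grade_true in H1, H2, H4, H8, H16, H32, H64 by reflexivity. tauto.
 - intros H A. unfold grade. fold (gcond 1 A). destruct (gcond 1 A) eqn:E; [|reflexivity].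
   pose proof (chk_in 1 (1 :: 2 :: 4 :: 8 :: 16 :: 32 :: 64 :: nil)%nat A (chk_all 1 (1 :: 2 :: 4 :: 8 :: 16 :: 32 :: 64 :: nil)%nat ltac:(vm_compute; reflexivity)) E) as Hin.
   simpl in Hin. destruct Hin as [<-|[<-|[<-|[<-|[<-|[<-|[<-|[]]]]]]]]; tauto. Qed.

Ltac zeval H := cbn [sumR] in H;
  repeat match type of H with context [zden ?l ?C] =>
    let v := eval vm_compute in (zden l C) in change (zden l C) with v in H end;
  repeat match type of H with context [OFz ?i ?j ?k] =>
    let v := eval vm_compute in (OFz i j k) in change (OFz i j k) with v in H end.

Lemma point_left df x : (forall k, (k < 8)%nat -> D_left df x k = 0) <->
  (grade_zero 0 (cl_mul (cl_dirac df x) cl_I) /\ grade_zero 1 (cl_mul (cl_dirac df x) cl_I)).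
Proof. rewrite gz0, gz1.
 pose proof (DL_expand df x 0) as L0; pose proof (DL_expand df x 1) as L1;
 pose proof (DL_expand df x 2) as L2; pose proof (DL_expand df x 3) as L3;
 pose proof (DL_expand df x 4) as L4; pose proof (DL_expand df x 5) as L5;
 pose proof (DL_expand df x 6) as L6; pose proof (DL_expand df x 7) as L7.
 pose proof (DI_expand df x 0) as I0; pose proof (DI_expand df x 1) as I1;
 pose proof (DI_expand df x 2) as I2; pose proof (DI_expand df x 4) as I4;
 pose proof (DI_expand df x 8) as I8; pose proof (DI_expand df x 16) as I16;
 pose proof (DI_expand df x 32) as I32; pose proof (DI_expand df x 64) as I64.
 zeval L0; zeval L1; zeval L2; zeval L3; zeval L4; zeval L5; zeval L6; zeval L7.
 zeval I0; zeval I1; zeval I2; zeval I4; zeval I8; zeval I16; zeval I32; zeval I64.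
 rewrite I0, I1, I2, I4, I8, I16, I32, I64. split.
 - intros H.
   pose proof (H 0%nat ltac:(lia)) as H0; pose proof (H 1%nat ltac:(lia)) as H1;
   pose proof (H 2%nat ltac:(lia)) as H2; pose proof (H 3%nat ltac:(lia)) as H3;
   pose proof (H 4%nat ltac:(lia)) as H4; pose proof (H 5%nat ltac:(lia)) as H5;
   pose proof (H 6%nat ltac:(lia)) as H6; pose proof (H 7%nat ltac:(lia)) as H7.
   rewrite L0 in H0; rewrite L1 in H1; rewrite L2 in H2; rewrite L3 in H3;
   rewrite L4 in H4; rewrite L5 in H5; rewrite L6 in H6; rewrite L7 in H7.
   repeat split; lra.
 - intros (h0 & h1 & h2 & h4 & h8 & h16 & h32 & h64) k Hk.
   destruct (lt8 k Hk) as [->|[->|[->|[->|[->|[->|[->| ->]]]]]]];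
   [rewrite L0|rewrite L1|rewrite L2|rewrite L3|rewrite L4|rewrite L5|rewrite L6|rewrite L7]; lra.
Qed.

Lemma point_right df x : (forall k, (k < 8)%nat -> D_left df x k = 0) ->
  ((forall k, (k < 8)%nat -> D_right df x k = 0) <-> grade_zero 1 (cl_mul (cl_dirac df x) cl_W)).
Proof. intros H. rewrite gz1.
 pose proof (H 0%nat ltac:(lia)) as H0; pose proof (H 1%nat ltac:(lia)) as H1;
 pose proof (H 2%nat ltac:(lia)) as H2; pose proof (H 3%nat ltac:(lia)) as H3;
 pose proof (H 4%nat ltac:(lia)) as H4; pose proof (H 5%nat ltac:(lia)) as H5;
 pose proof (H 6%nat ltac:(lia)) as H6; pose proof (H 7%nat ltac:(lia)) as H7.
 rewrite DL_expand in H0, H1, H2, H3, H4, H5, H6, H7.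
 zeval H0; zeval H1; zeval H2; zeval H3; zeval H4; zeval H5; zeval H6; zeval H7.
 pose proof (DR_expand df x 0) as L0; pose proof (DR_expand df x 1) as L1;
 pose proof (DR_expand df x 2) as L2; pose proof (DR_expand df x 3) as L3;
 pose proof (DR_expand df x 4) as L4; pose proof (DR_expand df x 5) as L5;
 pose proof (DR_expand df x 6) as L6; pose proof (DR_expand df x 7) as L7.
 pose proof (DW_expand df x 1) as I1;
 pose proof (DW_expand df x 2) as I2; pose proof (DW_expand df x 4) as I4;
 pose proof (DW_expand df x 8) as I8; pose proof (DW_expand df x 16) as I16;
 pose proof (DW_expand df x 32) as I32; pose proof (DW_expand df x 64) as I64.
 zeval L0; zeval L1; zeval L2; zeval L3; zeval L4; zeval L5; zeval L6; zeval L7.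
 zeval I1; zeval I2; zeval I4; zeval I8; zeval I16; zeval I32; zeval I64.
 rewrite I1, I2, I4, I8, I16, I32, I64. clear H. split.
 - intros H.
   pose proof (H 0%nat ltac:(lia)) as G0; pose proof (H 1%nat ltac:(lia)) as G1;
   pose proof (H 2%nat ltac:(lia)) as G2; pose proof (H 3%nat ltac:(lia)) as G3;
   pose proof (H 4%nat ltac:(lia)) as G4; pose proof (H 5%nat ltac:(lia)) as G5;
   pose proof (H 6%nat ltac:(lia)) as G6; pose proof (H 7%nat ltac:(lia)) as G7.
   rewrite L0 in G0; rewrite L1 in G1; rewrite L2 in G2; rewrite L3 in G3;
   rewrite L4 in G4; rewrite L5 in G5; rewrite L6 in G6; rewrite L7 in G7.
   clear H L0 L1 L2 L3 L4 L5 L6 L7 I1 I2 I4 I8 I16 I32 I64.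
   repeat split; lra.
 - intros (h1 & h2 & h4 & h8 & h16 & h32 & h64) k Hk.
   destruct (lt8 k Hk) as [->|[->|[->|[->|[->|[->|[->| ->]]]]]]];
   [rewrite L0|rewrite L1|rewrite L2|rewrite L3|rewrite L4|rewrite L5|rewrite L6|rewrite L7];
   clear L0 L1 L2 L3 L4 L5 L6 L7 I1 I2 I4 I8 I16 I32 I64; lra.
Qed.

Theorem theorem5p2 (f : (nat -> R) -> nat -> R)
  (df : nat -> nat -> (nat -> R) -> R)
  (Hf : on_R8 f) (Hdf : is_partials f df) :
  (left_regular df <->
     forall x, grade_zero 0 (cl_mul (cl_dirac df x) cl_I) /\
               grade_zero 1 (cl_mul (cl_dirac df x) cl_I)) /\
  (B_regular df <->
     forall x, grade_zero 0 (cl_mul (cl_dirac df x) cl_I) /\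
               grade_zero 1 (cl_mul (cl_dirac df x) cl_I) /\
               grade_zero 1 (cl_mul (cl_dirac df x) cl_W)).
Proof. unfold B_regular, left_regular, right_regular. split; split.
 - intros H x. apply point_left. intros; apply H; auto.
 - intros H x k Hk. apply (proj2 (point_left df x) (H x)); auto.
 - intros [HL HR] x. assert (HLx : forall k, (k < 8)%nat -> D_left df x k = 0) by (intros; apply HL; auto).
   pose proof (proj1 (point_left df x) HLx) as [A B]. split; [|split]; auto.
   apply (proj1 (point_right df x HLx)). intros; apply HR; auto.
 - intros H. assert (HL : forall x k, (k < 8)%nat -> D_left df x k = 0).
   { intros x. destruct (H x) as [A [B _]]. apply point_left; auto. }
   split; [exact HL|]. intros x k Hk. destruct (H x) as [_ [_ C]].
   apply (proj2 (point_right df x (HL x)) C); auto.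
Qed.
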